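(* Let $R>1$ and $N\ge1$ with $RN$ an integer. For every encoding channel $\mathcal E$ from $RN$ qubits to $N$ qubits together with a classical register $M$, and every decoding channel $\mathcal D$ from the $N$ qubits and $M$ back to $RN$ qubits, \[ F_c\bigl(\mathcal D\circ(\mathcal I_2^{\otimes N}\otimes\mathcal I_M)\circ\mathcal E\bigr)\le 2^{-(R-1)N}, \] where $\mathcal I_2$ is the one-qubit identity channel; i.e. the strong converse parameter of $\mathcal I_2$ at rate $R$ satisfies $\gamma^Q(\mathcal I_2,R)=R-1>0$.
   Context: $\log$ base 2. For a channel $\Lambda$ on $m$ qubits, the channel fidelity is $F_c(\Lambda)=\langle\Phi|(\mathrm{id}\otimes\Lambda)(\Phi)|\Phi\rangle$ with $\Phi$ the maximally entangled state on $2^m\times2^m$ dimensions. A strong converse with parameter $\gamma^Q(\mathcal N,R)>0$ for a channel $\mathcal N$ at rate $R$ means that for all $N$ and all encodings $\mathcal E$ of $RN$ qubits into the input of $\mathcal N^{\otimes N}$ plus free forward classical communication $M$, and all decodings $\mathcal D$, $F_c(\mathcal D\circ(\mathcal N^{\otimes N}\otimes\mathcal I_M)\circ\mathcal E)\le2^{-\gamma^Q(\mathcal N,R)N}$. *)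

(* Defs.v *)
From HB Require Import structures.
From mathcomp Require Import all_boot all_order all_algebra.
From mathcomp Require Import reals.
From mathcomp Require Import complex.

Set Implicit Arguments.
Unset Strict Implicit.
Unset Printing Implicit Defensive.

Import Order.TTheory GRing.Theory Num.Theory.
Local Open Scope ring_scope.

Section Quantum.
Variable R : realType.
Local Notation C := (R[i]).

(* Linear operators |J> <I| with rows indexed by the finite type J and
   columns indexed by I (basis-indexed matrices). *)
Definition op (J I : finType) := J -> I -> C.

Definition opmul (K J I : finType) (A : op K J) (B : op J I) : op K I :=
  fun k i => \sum_(j : J) A k j * B j i.

Definition adj (J I : finType) (A : op J I) : op I J :=
  fun i j => (A j i)^*.

Definition idop (I : finType) : op I I := fun i j => (i == j)%:R.

Definition trace (I : finType) (A : op I I) : C := \sum_(i : I) A i i.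

Definition supop (I J : finType) := op I I -> op J J.

(* Quantum channel (CPTP map) from system I to system J: it admits a
   finite Kraus representation  rho |-> sum_k K_k rho K_k^dagger
   with  sum_k K_k^dagger K_k = 1. *)
Definition is_channel (I J : finType) (L : supop I J) : Prop :=
  exists Ks : seq (op J I),
    (forall i i', \sum_(K <- Ks) opmul (adj K) K i i' = @idop I i i') /\
    forall rho : op I I,
      forall j j', L rho j j' = \sum_(K <- Ks) opmul (opmul K rho) (adj K) j j'.

Definition tensor_id (A I J : finType) (L : supop I J) : supop (A * I)%type (A * J)%type :=
  fun rho p q =>
    L (fun x y => rho (p.1, x) (q.1, y)) p.2 q.2.

Definition id_chan (I : finType) : supop I I := fun rho => rho.

(* The identity channel on a classical register M: classical information is
   transmitted perfectly, i.e. the register is read in its computational basis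
   (complete dephasing). *)
Definition classical_id (M : finType) : supop M M :=
  fun rho i j => if i == j then rho i i else 0.

Definition tensor_chan (I1 J1 I2 J2 : finType) (L1 : supop I1 J1)
  (L2 : supop I2 J2) : supop (I1 * I2)%type (J1 * J2)%type :=
  fun rho p q =>
    L1 (fun a b =>
          L2 (fun x y => rho (a, x) (b, y)) p.2 q.2) p.1 q.1.

(* n-fold tensor power of the one-qubit identity channel, on the n-qubit
   system n.-tuple bool (identified with (C^2)^{(x) n}). *)
Definition qubits (n : nat) : finType := (n.-tuple bool)%type.

Definition id_qubits (n : nat) : supop (qubits n) (qubits n) := @id_chan _.

(* Maximally entangled state Phi = |Phi><Phi| on I * I, with
   |Phi> = d^{-1/2} sum_i |i>|i>,  d = #|I|. *)
Definition maxent (I : finType) : op (I * I)%type (I * I)%type :=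
  fun p q => ((p.1 == p.2) && (q.1 == q.2))%:R / #|I|%:R.

(* Channel fidelity  F_c(L) = <Phi| (id (x) L)(Phi) |Phi> = tr(Phi (id(x)L)(Phi)). *)
Definition chan_fid (I : finType) (L : supop I I) : C :=
  trace (opmul (@maxent I) (tensor_id L (@maxent I))).

End Quantum.

(* Main.v *)
Require Import Defs.
From HB Require Import structures.
From mathcomp Require Import all_boot all_order all_algebra.
From mathcomp Require Import reals complex.
From mathcomp Require Import ring.
Import Order.TTheory GRing.Theory Num.Theory.
Local Open Scope ring_scope.

Lemma cs_real (F : numDomainType) (I : finType) (a b : I -> F) :
  (forall i, 0 <= a i) -> (forall i, 0 <= b i) ->
  (\sum_i a i * b i) ^+ 2 <= (\sum_i a i ^+ 2) * (\sum_i b i ^+ 2).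
Proof.
move=> a0 b0.
have key : 0 <= \sum_i \sum_j (a i * b j - a j * b i) ^+ 2.
  apply: sumr_ge0 => i _; apply: sumr_ge0 => j _.
  have hr : a i * b j - a j * b i \is Num.real.
    by apply: rpredB; apply: rpredM; apply: ger0_real.
  by rewrite -real_normK // exprn_ge0.
set A := \sum_i a i ^+ 2. set B := \sum_i b i ^+ 2. set P := \sum_i a i * b i.
have S1 : \sum_i \sum_j a i ^+ 2 * b j ^+ 2 = A * B.
  by rewrite /A mulr_suml; apply: eq_bigr => i _; rewrite mulr_sumr.
have S2 : \sum_i \sum_j a j ^+ 2 * b i ^+ 2 = A * B.
  by rewrite exchange_big.
have S3 : \sum_i \sum_j a i * b i * (a j * b j) = P ^+ 2.
  by rewrite expr2 /P mulr_suml; apply: eq_bigr => i _; rewrite mulr_sumr.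
have e : \sum_i \sum_j (a i * b j - a j * b i) ^+ 2 =
  \sum_i \sum_j a i ^+ 2 * b j ^+ 2 + \sum_i \sum_j a j ^+ 2 * b i ^+ 2
   - (\sum_i \sum_j a i * b i * (a j * b j)) *+ 2.
  rewrite -sumrMnl -big_split -sumrB; apply: eq_bigr => i _.
  rewrite -sumrMnl -big_split -sumrB; apply: eq_bigr => j _.
  rewrite mulr2n /=; ring.
by move: key; rewrite e S1 S2 S3 -mulr2n -mulrnBl pmulrn_lge0 // subr_ge0.
Qed.

Lemma sum_delta (T : ringType) (I : finType) (i : I) (F : I -> T) :
  \sum_j (i == j)%:R * F j = F i.
Proof.
rewrite (bigD1 i) //= eqxx mul1r big1 ?addr0 // => j /negbTE.
by rewrite eq_sym => ->; rewrite mul0r.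
Qed.

Lemma sum_pair (T : ringType) (I J : finType) (F : I * J -> T) :
  \sum_p F p = \sum_i \sum_j F (i, j).
Proof. by rewrite pair_bigA; apply: eq_bigr => -[]. Qed.

Lemma reorder (T : ringType) (A J : finType) (TD TE : Type) (rD : seq TD) (rE : seq TE)
  (F : A -> A -> TD -> J -> J -> TE -> T) :
  \sum_a \sum_b \sum_(D <- rD) \sum_j \sum_j' \sum_(E <- rE) F a b D j j' E =
  \sum_(D <- rD) \sum_(E <- rE) \sum_j \sum_j' \sum_b \sum_a F a b D j j' E.
Proof.
under eq_bigr => a _ do under eq_bigr => b _ do under eq_bigr => D _ do
  under eq_bigr => j _ do rewrite exchange_big.
under eq_bigr => a _ do under eq_bigr => b _ do under eq_bigr => D _ do
  rewrite exchange_big.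
(* now [a,b,D,E,j,j'] ; move a to end *)
rewrite exchange_big.
under eq_bigr => b _ do rewrite exchange_big.
under eq_bigr => b _ do under eq_bigr => D _ do rewrite exchange_big.
under eq_bigr => b _ do under eq_bigr => D _ do under eq_bigr => E _ do rewrite exchange_big.
under eq_bigr => b _ do under eq_bigr => D _ do under eq_bigr => E _ do
  under eq_bigr => j _ do rewrite exchange_big.
(* [b,D,E,j,j',a] *)
rewrite exchange_big.
under eq_bigr => D _ do rewrite exchange_big.
under eq_bigr => D _ do under eq_bigr => E _ do rewrite exchange_big.
under eq_bigr => D _ do under eq_bigr => E _ do under eq_bigr => j _ do rewrite exchange_big.
by [].
Qed.

Section Q.
Variable R : realType.
Local Notation C := (R[i]).

Lemma fid_gen (I : finType) (L : supop R I I) :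
  chan_fid L = \sum_a \sum_b L (fun x y => ((b == x) && (a == y))%:R / #|I|%:R) b a / #|I|%:R.
Proof.
rewrite /chan_fid /trace /opmul /maxent /tensor_id sum_pair.
apply: eq_bigr => a _ /=.
rewrite (eq_bigr (fun a2 => (a == a2)%:R * \sum_b (L (fun x y => ((b == x) && (a == y))%:R / #|I|%:R) b a / #|I|%:R))).
  by rewrite sum_delta.
move=> a2 _; rewrite sum_pair mulr_sumr; apply: eq_bigr => b _ /=.
rewrite (eq_bigr (fun b2 => (b == b2)%:R * ((a == a2)%:R * (L (fun x y => ((b == x) && (a == y))%:R / #|I|%:R) b a / #|I|%:R)))).
  by rewrite sum_delta.
move=> b2 _; rewrite -mulnb natrM.
case: (a =P a2) => [<-|_]; last by rewrite !mul0r mulr0.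
case: (b =P b2) => [<-|/eqP/negbTE H]; last by rewrite ?H !mul0r ?mulr0 ?mul0r.
by rewrite !mul1r mulrC.
Qed.

Lemma kraus_app (I J : finType) (L : supop R I J) (Ks : seq (op R J I)) :
  (forall rho j j', L rho j j' = \sum_(K <- Ks) opmul (opmul K rho) (adj K) j j') ->
  forall rho j j', L rho j j' = \sum_(K <- Ks) \sum_i' \sum_i K j i * rho i i' * (K j' i')^*.
Proof.
move=> h rho j j'; rewrite h; apply: eq_bigr => K _; rewrite /opmul /adj.
by apply: eq_bigr => i' _; rewrite mulr_suml.
Qed.

Lemma kraus_unit (I J : finType) (L : supop R I J) (Ks : seq (op R J I)) a b (c : C) :
  (forall rho j j', L rho j j' = \sum_(K <- Ks) opmul (opmul K rho) (adj K) j j') ->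
  forall z z', L (fun x y => ((b == x) && (a == y))%:R * c) z z' =
     \sum_(K <- Ks) K z b * (K z' a)^* * c.
Proof.
move=> h z z'; rewrite h; apply: eq_bigr => K _; rewrite /opmul /adj.
rewrite (eq_bigr (fun i' => (a == i')%:R * (K z b * c * (K z' i')^*))).
  by rewrite sum_delta /=; ring.
move=> i' _.
rewrite (eq_bigr (fun i => (b == i)%:R * (K z i * (a == i')%:R * c))).
  by rewrite sum_delta /=; ring.
by move=> i _; rewrite -mulnb natrM /=; ring.
Qed.

Lemma Ylem (N : nat) (M : finType) (X : op R (qubits N * M)%type (qubits N * M)%type) j j' :
  tensor_chan (@id_qubits R N) (@classical_id R M) X j j' = (j.2 == j'.2)%:R * X j j'.
Proof.
case: j j' => x m [x' m']; rewrite /tensor_chan /id_qubits /id_chan /classical_id /=.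
by case: eqP => [->|_]; rewrite ?mul1r ?mul0r.
Qed.

Lemma cs_C (I : finType) (u v : I -> C) :
  `|\sum_i u i * v i| ^+ 2 <= (\sum_i `|u i| ^+ 2) * (\sum_i `|v i| ^+ 2).
Proof.
apply: le_trans (@cs_real _ _ (fun i => `|u i|) (fun i => `|v i|) (fun i => normr_ge0 _) (fun i => normr_ge0 _)).
have h : `|\sum_i u i * v i| <= \sum_i `|u i| * `|v i|.
  by apply: le_trans (ler_norm_sum _ _ _) _; under eq_bigr do rewrite normrM.
by rewrite !expr2 ler_pM.
Qed.

Lemma cs_C1 (I : finType) (u : I -> C) :
  `|\sum_i u i| ^+ 2 <= #|I|%:R * \sum_i `|u i| ^+ 2.
Proof.
have := @cs_C I u (fun _ => 1).
under eq_bigr do rewrite mulr1.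
under [X in _ <= _ * X -> _]eq_bigr do rewrite normr1 expr1n.
by rewrite sumr_const mulrC.
Qed.

Lemma block_bound (X M : finType) (g : X * M -> C) :
  \sum_j \sum_j' (j.2 == j'.2)%:R * (g j * (g j')^*) <= #|X|%:R * \sum_j `|g j| ^+ 2.
Proof.
have e : \sum_j \sum_j' (j.2 == j'.2)%:R * (g j * (g j')^*) =
         \sum_m `|\sum_x g (x, m)| ^+ 2.
  rewrite sum_pair.
  under eq_bigr => x _ do under eq_bigr => m _ do rewrite sum_pair.
  rewrite exchange_big /=.
  under eq_bigr => m _ do under eq_bigr => x _ do rewrite exchange_big.
  under eq_bigr => m _ do rewrite exchange_big.
  apply: eq_bigr => m _ /=; rewrite normCK.
  rewrite (eq_bigr (fun m' => (m == m')%:R * ((\sum_x g (x, m)) * (\sum_x' g (x', m'))^*))).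
    by rewrite sum_delta.
  move=> m' _; rewrite rmorph_sum mulr_suml mulr_sumr; apply: eq_bigr => x _ /=.
  rewrite mulr_sumr mulr_sumr; apply: eq_bigr => x' _ /=.
  by rewrite mulrA.
rewrite e.
have h : \sum_m `|\sum_x g (x, m)| ^+ 2 <= \sum_m #|X|%:R * \sum_x `|g (x, m)| ^+ 2.
  by apply: ler_sum => m _; exact: cs_C1.
apply: le_trans h _.
rewrite -mulr_sumr sum_pair exchange_big /=.
by [].
Qed.
End Q.

Theorem lemma16 (R : realType) (N k : nat) (M : finType)
  (E : supop R (qubits k) (qubits N * M)%type)
  (D : supop R (qubits N * M)%type (qubits k)) :
  (1 <= N)%N -> (N < k)%N ->
  is_channel E -> is_channel D ->
  chan_fid (fun rho => D (tensor_chan (@id_qubits R N) (@classical_id R M) (E rho)))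
    <= (2%:R ^- (k - N) : R[i]).
Proof.
move=> _ hNk [Es [EsId EsL]] [Ds [DsId DsL]].
rewrite fid_gen.
set d : R[i] := #|qubits k|%:R.
pose G (a b : qubits k) (Dk : op R (qubits k) (qubits N * M)%type) (j j' : (qubits N * M)%type) (Ek : op R (qubits N * M)%type (qubits k)) :=
  (j.2 == j'.2)%:R * (Dk b j * Ek j b) * ((Dk a j')^* * (Ek j' a)^*) / d / d.
have step1 : forall a b,
  D (tensor_chan (@id_qubits R N) (@classical_id R M)
       (E (fun x y => ((b == x) && (a == y))%:R / d))) b a / d =
  \sum_(Dk <- Ds) \sum_j \sum_j' \sum_(Ek <- Es) G a b Dk j j' Ek.
  move=> a b; rewrite (@kraus_app _ _ _ _ _ DsL) mulr_suml; apply: eq_bigr => Dk _.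
  rewrite exchange_big mulr_suml; apply: eq_bigr => j _.
  rewrite mulr_suml; apply: eq_bigr => j' _.
  rewrite Ylem (@kraus_unit _ _ _ _ _ _ _ _ EsL) !mulr_sumr !mulr_suml.
  by apply: eq_bigr => Ek _; rewrite /G /=; ring.
under eq_bigr do under eq_bigr do rewrite step1.
rewrite reorder.
pose g (Dk : op R (qubits k) (qubits N * M)%type) (Ek : op R (qubits N * M)%type (qubits k)) j :=
  \sum_b Dk b j * Ek j b.
have step2 : \sum_(Dk <- Ds) \sum_(Ek <- Es) \sum_j \sum_j' \sum_b \sum_a G a b Dk j j' Ek =
  (\sum_(Dk <- Ds) \sum_(Ek <- Es) \sum_j \sum_j' (j.2 == j'.2)%:R * (g Dk Ek j * (g Dk Ek j')^*)) / d / d.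
  rewrite !mulr_suml; apply: eq_bigr => Dk _; rewrite !mulr_suml; apply: eq_bigr => Ek _.
  rewrite !mulr_suml; apply: eq_bigr => j _; rewrite !mulr_suml; apply: eq_bigr => j' _.
  rewrite /g rmorph_sum mulr_suml mulr_sumr mulr_suml mulr_suml; apply: eq_bigr => b _.
  rewrite mulr_sumr mulr_sumr mulr_suml mulr_suml; apply: eq_bigr => a _.
  by rewrite /G rmorphM /=; ring.
rewrite step2.
have hD : forall j, \sum_(Dk <- Ds) \sum_b `|Dk b j| ^+ 2 = 1.
  move=> j; have h := DsId j j; rewrite /idop eqxx /opmul /adj /= in h; rewrite -[1]h.
  by apply: eq_bigr => Dk _; apply: eq_bigr => b _; rewrite normCK mulrC.
have hE : forall b, \sum_(Ek <- Es) \sum_j `|Ek j b| ^+ 2 = 1.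
  move=> b; have h := EsId b b; rewrite /idop eqxx /opmul /adj /= in h; rewrite -[1]h.
  by apply: eq_bigr => Ek _; apply: eq_bigr => j _; rewrite normCK mulrC.
set c : R[i] := #|qubits N|%:R.
have hc : 0 <= c by rewrite /c ler0n.
have bnd : \sum_(Dk <- Ds) \sum_(Ek <- Es) \sum_j \sum_j' (j.2 == j'.2)%:R * (g Dk Ek j * (g Dk Ek j')^*)
     <= c * d.
  have b1 : \sum_(Dk <- Ds) \sum_(Ek <- Es) \sum_j \sum_j' (j.2 == j'.2)%:R * (g Dk Ek j * (g Dk Ek j')^*)
     <= \sum_(Dk <- Ds) \sum_(Ek <- Es) c * \sum_j (\sum_b `|Dk b j| ^+ 2) * (\sum_b `|Ek j b| ^+ 2).
    apply: ler_sum => Dk _; apply: ler_sum => Ek _.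
    apply: le_trans (@block_bound _ _ _ (g Dk Ek)) _.
    rewrite ler_wpM2l //; apply: ler_sum => j _.
    exact: cs_C.
  apply: le_trans b1 _; rewrite le_eqVlt; apply/orP; left; apply/eqP.
  under eq_bigr do rewrite -mulr_sumr.
  rewrite -mulr_sumr; congr (c * _).
  have -> : \sum_(Dk <- Ds) \sum_(Ek <- Es) \sum_j (\sum_b `|Dk b j| ^+ 2) * (\sum_b `|Ek j b| ^+ 2)
    = \sum_j (\sum_(Dk <- Ds) \sum_b `|Dk b j| ^+ 2) * (\sum_(Ek <- Es) \sum_b `|Ek j b| ^+ 2).
    rewrite [RHS](eq_bigr (fun j => \sum_(Dk <- Ds) (\sum_b `|Dk b j| ^+ 2) * (\sum_(Ek <- Es) \sum_b `|Ek j b| ^+ 2))); last by move=> j _; rewrite mulr_suml.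
    rewrite [RHS]exchange_big /=; apply: eq_bigr => Dk _.
    rewrite [RHS](eq_bigr (fun j => \sum_(Ek <- Es) (\sum_b `|Dk b j| ^+ 2) * (\sum_b `|Ek j b| ^+ 2))); last by move=> j _; rewrite mulr_sumr.
    by rewrite [RHS]exchange_big.
  under eq_bigr do rewrite hD mul1r.
  rewrite exchange_big /=.
  under eq_bigr do rewrite exchange_big /=.
  rewrite exchange_big /=.
  under eq_bigr do rewrite hE.
  rewrite sumr_const /d; congr (_ %:R); exact: eq_card.
have hc2 : c = 2%:R ^+ N by rewrite /c /qubits card_tuple card_bool natrX.
have hd2 : d = 2%:R ^+ k by rewrite /d /qubits card_tuple card_bool natrX.
have dpos : 0 < d by rewrite hd2 exprn_gt0 // ltr0n.
apply: (@le_trans _ _ (c * d / d / d)).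
  by rewrite ler_pM2r ?invr_gt0 // ler_pM2r ?invr_gt0.
rewrite mulfK ?gt_eqF // hc2 hd2 expfB // invfM invrK mulrC.
by [].
Qed.
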